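(* Let $f$ be any function of unitation on $\{0,1\}^n$. Consider the $(\mu+1)$ EA with phenotypic clearing with clearing radius $\sigma=1$, niche capacity $\kappa\in\mathbb{N}$ and population size $\mu\geq (n+1)\cdot\kappa$ on $f$. Then winners are never removed from the population, i.e., if $x\in P_t$ is a winner then $x\in P_{t+1}$.
   Context: A function of unitation is $f:\{0,1\}^n\to\mathbb{R}$ with $f(x)=u(|x|_1)$ for some $u:\{0,\dots,n\}\to\mathbb{R}^+$, where $|x|_1$ is the number of 1-bits of $x$; fitness values are assumed positive. The $(\mu+1)$ EA with clearing (population size $\mu$, clearing radius $\sigma$, niche capacity $\kappa$, distance function $\mathrm{d}$): $P_0$ consists of $\mu$ bit strings chosen independently and uniformly at random. In generation $t$: choose a parent $x\in P_t$ uniformly at random; create $y$ by flipping each bit of $x$ independently with probability $1/n$; let $P_t^*=P_t\cup\{y\}$; update the fitness values of $P_t^*$ by the clearing procedure: sort $P_t^*$ by decreasing fitness; for $i=1,\dots,|P_t^*|$, if the current fitness of $P[i]$ is positive, set $w:=1$ and for $j=i+1,\dots,|P_t^*|$: if the current fitness of $P[j]$ is positive and $\mathrm{d}(P[i],P[j])<\sigma$ then, if $w<\kappa$ set $w:=w+1$, else set the fitness of $P[j]$ to $0$. Individuals whose fitness is not reset to $0$ are winners, the others are cleared. Then choose $z\in P_t$ with worst (cleared) fitness uniformly at random; if the (cleared) fitness of $y$ is at least that of $z$, set $P_{t+1}=P_t^*\setminus\{z\}$, otherwise $P_{t+1}=P_t^*\setminus\{y\}$. Phenotypic clearing uses $\mathrm{d}(x,y)=\big||x|_1-|y|_1\big|$.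 *)

(* Defs.v *)
From mathcomp Require Import all_boot all_order all_algebra.
Set Implicit Arguments. Unset Strict Implicit. Unset Printing Implicit Defensive.
Import Order.TTheory GRing.Theory Num.Theory.
Local Open Scope ring_scope.

Definition bitstring (n : nat) := (n.-tuple bool)%type.

Definition ones n (x : bitstring n) : nat := count id x.

Definition unitation {R : numDomainType} n (u : nat -> R) (x : bitstring n) : R :=
  u (ones x).

Definition pheno_dist n (x y : bitstring n) : nat :=
  ((ones x - ones y) + (ones y - ones x))%N.

(* One iteration i of the outer loop of the clearing procedure, operating on
   the sorted population Q (positions 0..m-1) with current fitness vector fit:
   if fit i > 0, set w := 1 and for j = i+1..m-1, if fit j > 0 and
   d(Q i, Q j) < sigma then (if w < kappa then w := w+1 else fit j := 0). *)
Definition clear_step {R : numDomainType} {T : Type} (d : T -> T -> nat)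
    (sigma kappa m : nat) (Q : nat -> T) (fit : nat -> R) (i : nat) : nat -> R :=
  if 0 < fit i then
    (foldl (fun (st : (nat -> R) * nat) j =>
        let: (f, w) := st in
        if (0 < f j) && (d (Q i) (Q j) < sigma)%N then
          (if (w < kappa)%N then (f, w.+1)
           else ((fun k => if k == j then 0 else f k), w))
        else (f, w))
      (fit, 1%N) (iota i.+1 (m - i.+1))).1
  else fit.

Definition clearing {R : numDomainType} {T : Type} (d : T -> T -> nat)
    (sigma kappa m : nat) (Q : nat -> T) (fit : nat -> R) : nat -> R :=
  foldl (clear_step d sigma kappa m Q) fit (iota 0 m).

(* P_t^star = P_t ∪ {y}: the offspring y gets index mu = size Pt. *)
Definition pstar n (Pt : seq (bitstring n)) (y : bitstring n) := rcons Pt y.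

Definition ind n (Pt : seq (bitstring n)) (y : bitstring n) (k : nat) :=
  nth y (pstar Pt y) k.

(* idx is a valid sorting of P_t^star by decreasing fitness (ties broken
   arbitrarily): a permutation of the indices 0..mu whose fitness values are
   nonincreasing along the list. *)
Definition sorting_order {R : numDomainType} n (u : nat -> R)
    (Pt : seq (bitstring n)) (y : bitstring n) (idx : seq nat) : Prop :=
  perm_eq idx (iota 0 (size Pt).+1) /\
  sorted (fun a b => unitation u (ind Pt y b) <= unitation u (ind Pt y a)) idx.

Definition cleared_fit {R : numDomainType} n (u : nat -> R) (sigma kappa : nat)
    (Pt : seq (bitstring n)) (y : bitstring n) (idx : seq nat) (k : nat) : R :=
  clearing (@pheno_dist n) sigma kappa (size Pt).+1
    (fun i => ind Pt y (nth 0%N idx i))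
    (fun i => unitation u (ind Pt y (nth 0%N idx i)))
    (index k idx).

(* Index (in P_t^star) of the individual removed in the replacement step, given
   the chosen worst individual z of P_t: z if cf(y) >= cf(z), else y. *)
Definition removed_index {R : numDomainType} n (u : nat -> R) (sigma kappa : nat)
    (Pt : seq (bitstring n)) (y : bitstring n) (idx : seq nat) (z : nat) : nat :=
  if cleared_fit u sigma kappa Pt y idx z <= cleared_fit u sigma kappa Pt y idx (size Pt)
  then z else size Pt.

Definition next_pop {R : numDomainType} n (u : nat -> R) (sigma kappa : nat)
    (Pt : seq (bitstring n)) (y : bitstring n) (idx : seq nat) (z : nat)
    : seq (bitstring n) :=
  [seq ind Pt y k | k <- iota 0 (size Pt).+1 &
                    k != removed_index u sigma kappa Pt y idx z].

(* Main.v *)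
Require Import Defs.
From mathcomp Require Import all_boot all_order all_algebra.
From mathcomp Require Import zify.
Set Implicit Arguments. Unset Strict Implicit. Unset Printing Implicit Defensive.
Import Order.TTheory GRing.Theory Num.Theory.
Local Open Scope ring_scope.

Definition body {R : numDomainType} {T : Type} (d : T -> T -> nat)
    (sigma kappa : nat) (Q : nat -> T) (i : nat) :=
  (fun (st : (nat -> R) * nat) j =>
        let: (f, w) := st in
        if (0 < f j) && (d (Q i) (Q j) < sigma)%N then
          (if (w < kappa)%N then (f, w.+1)
           else ((fun k => if k == j then 0 else f k), w))
        else (f, w)).

Lemma clear_stepE {R : numDomainType} {T : Type} (d : T -> T -> nat)
    (sigma kappa m : nat) (Q : nat -> T) (fit : nat -> R) (i : nat) :
  clear_step d sigma kappa m Q fit i =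
  if 0 < fit i then (foldl (body d sigma kappa Q i) (fit, 1%N) (iota i.+1 (m - i.+1))).1
  else fit.
Proof. by []. Qed.

Lemma inner {R : numDomainType} {T : Type} (d : T -> T -> nat)
    (sigma kappa : nat) (Q : nat -> T) (i : nat) (js : seq nat) (f : nat -> R) w :
  uniq js ->
  let st := foldl (body d sigma kappa Q i) (f, w) js in
  (forall p, p \notin js -> st.1 p = f p) /\
  (forall p, 0 < st.1 p -> 0 < f p) /\
  ((w <= kappa)%N ->
   (count (fun j => (0 < st.1 j)%R && (d (Q i) (Q j) < sigma)%N) js <= kappa - w)%N).
Proof.
elim: js f w => [|j js IH] f w /=.
  by move=> _; split=> //; split.
move=> /andP[jn un].
rewrite -/(body d sigma kappa Q i (f, w) j).
case E: (body d sigma kappa Q i (f, w) j) => [f1 w1].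
have [H1 [H2 H3]] := IH f1 w1 un.
have Eb : body d sigma kappa Q i (f, w) j =
  if (0 < f j) && (d (Q i) (Q j) < sigma)%N then
          (if (w < kappa)%N then (f, w.+1)
           else ((fun k => if k == j then 0 else f k), w))
        else (f, w) by [].
rewrite Eb in E.
move: E; case: ifP => [/andP[fj dj]|nfj].
  case: ifP => wk [? ?]; subst f1 w1.
    split; first by move=> p; rewrite in_cons negb_or => /andP[_ /H1].
    split; first by [].
    move=> _; rewrite H1 // fj dj /=.
    have := H3 wk; lia.
  split.
    move=> p; rewrite in_cons negb_or => /andP[pj /H1 ->].
    by rewrite (negbTE pj).
  split.
    move=> p /H2; case: eqP => // _; by rewrite ltxx.
  move=> wk'; rewrite H1 // eqxx ltxx /=.
  have := H3 wk'; lia.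
move=> [? ?]; subst f1 w1.
split; first by move=> p; rewrite in_cons negb_or => /andP[_ /H1].
split; first by [].
move=> wk; rewrite H1 // nfj /=; exact: H3.
Qed.

Section Outer.
Variables (R : numDomainType) (T : Type) (d : T -> T -> nat) (sigma kappa m : nat)
  (Q : nat -> T) (fit : nat -> R).

Local Notation CS := (@clear_step R T d sigma kappa m Q).

Lemma cs_pos F i p : 0 < CS F i p -> 0 < F p.
Proof.
rewrite clear_stepE; case: ifP => // _.
have [_ [H _]] := inner d sigma kappa Q i F 1 (iota_uniq i.+1 (m - i.+1)).
exact: H.
Qed.

Lemma cs_count F i : (0 < kappa)%N -> 0 < F i ->
  (count (fun j => (0 < CS F i j)%R && (d (Q i) (Q j) < sigma)%N)
     (iota i.+1 (m - i.+1)) <= kappa - 1)%N.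
Proof.
move=> k0 Fi; rewrite clear_stepE Fi.
have [_ [_ H]] := inner d sigma kappa Q i F 1 (iota_uniq i.+1 (m - i.+1)).
exact: H.
Qed.

Definition Fs t := foldl CS fit (iota 0 t).

Lemma FsS t : Fs t.+1 = CS (Fs t) t.
Proof. by rewrite /Fs -addn1 iotaD foldl_cat /=. Qed.

Lemma Fs_mono t1 t2 p : (t1 <= t2)%N -> 0 < Fs t2 p -> 0 < Fs t1 p.
Proof.
move/subnKC <-; elim: (t2 - t1)%N => [|k IH]; first by rewrite addn0.
by rewrite addnS FsS => /cs_pos /IH.
Qed.

Lemma clearingE : clearing d sigma kappa m Q fit = Fs m.
Proof. by []. Qed.

Lemma class_bound (c : nat -> nat) v :
  (0 < kappa)%N -> (forall i j, (d (Q i) (Q j) < sigma)%N = (c i == c j)) ->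
  (count (fun p => (0 < Fs m p)%R && (c p == v)) (iota 0 m) <= kappa)%N.
Proof.
move=> k0 hd.
set P := fun i => [&& (i < m)%N, c i == v & (0 < Fs i i)%R].
case: (boolP (has P (iota 0 m))) => [hP|hP]; last first.
  rewrite (eq_in_count (a2 := pred0)) ?count_pred0 // => p pin /=.
  apply/negP => /andP[pos cv].
  move/hasPn: hP => /(_ p pin); rewrite /P cv (Fs_mono _ pos) ?andbT.
    by move: pin; rewrite mem_iota add0n => /andP[_ ->].
  by move: pin; rewrite mem_iota add0n => /andP[_ /ltnW].
have exP : exists i, P i by move/hasP: hP => [i _ Pi]; exists i.
case: (ex_minnP exP) => i /and3P[im ci Fi] imin.
have -> : iota 0 m = iota 0 i ++ i :: iota i.+1 (m - i.+1).
  have e1 : m = (i + (m - i.+1).+1)%N by lia.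
  by rewrite [in LHS]e1 iotaD add0n.
rewrite count_cat /=.
have -> : count (fun p => (0 < Fs m p)%R && (c p == v)) (iota 0 i) = 0%N.
  rewrite (eq_in_count (a2 := pred0)) ?count_pred0 // => p pin /=.
  apply/negP => /andP[pos cv].
  move: pin; rewrite mem_iota add0n => /andP[_ pi].
  have Pp : ~~ P p.
    apply/negP => /imin; rewrite leqNgt pi //.
  move: Pp; rewrite /P cv (ltn_trans pi im) /=.
  by rewrite (Fs_mono _ pos) // ltnW // (ltn_trans pi im).
have H := cs_count (F := Fs i) k0 Fi.
rewrite -FsS in H.
have : (count (fun p => (0 < Fs m p)%R && (c p == v)) (iota i.+1 (m - i.+1))
   <= count (fun j => (0 < Fs i.+1 j)%R && (d (Q i) (Q j) < sigma)%N)
     (iota i.+1 (m - i.+1)))%N.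
  apply: sub_count => p /= /andP[pos cv].
  by rewrite hd (eqP cv) (eqP ci) eqxx andbT (Fs_mono _ pos).
move: H; case: ((0 < Fs m i)%R && (c i == v)); lia.
Qed.

End Outer.

Lemma count_or (P1 P2 : pred nat) s :
  (count (fun x => P1 x || P2 x) s <= count P1 s + count P2 s)%N.
Proof. elim: s => //= x s IH; case: (P1 x); case: (P2 x) => /=; lia. Qed.

Lemma total_bound (R : numDomainType) (T : Type) (d : T -> T -> nat) (sigma kappa m : nat)
  (Q : nat -> T) (fit : nat -> R) (c : nat -> nat) N :
  (0 < kappa)%N -> (forall i j, (d (Q i) (Q j) < sigma)%N = (c i == c j)) ->
  (forall p, c p < N)%N ->
  (count (fun p => (0 < clearing d sigma kappa m Q fit p)%R) (iota 0 m) <= N * kappa)%N.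
Proof.
move=> k0 hd hN.
rewrite clearingE.
suff H : forall N', (count (fun p => (0 < Fs d sigma kappa m Q fit m p)%R && (c p < N')%N)
   (iota 0 m) <= N' * kappa)%N.
  by rewrite -(eq_count (a1 := fun p => (0 < Fs d sigma kappa m Q fit m p)%R && (c p < N)%N))
     ?H // => p; rewrite hN andbT.
elim=> [|N' IH].
  by rewrite (eq_count (a2 := pred0)) ?count_pred0 // => p; rewrite ltn0 andbF.
rewrite (eq_count (a2 := fun p => ((0 < Fs d sigma kappa m Q fit m p)%R && (c p < N')%N)
   || ((0 < Fs d sigma kappa m Q fit m p)%R && (c p == N')))); last first.
  by move=> p /=; rewrite ltnS leq_eqVlt -andb_orr orbC.
apply: (leq_trans (count_or _ _ _)).
have := class_bound m fit N' k0 hd.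
rewrite mulSn; lia.
Qed.

Unset Implicit Arguments.

Theorem lemma1 (R : realFieldType) (n : nat) (u : nat -> R) (kappa mu : nat)
    (Pt : seq (bitstring n)) (y : bitstring n) (idx : seq nat) (z k : nat) :
  (forall i, (i <= n)%N -> 0 < u i) ->
  (0 < kappa)%N ->
  (n.+1 * kappa <= mu)%N ->
  size Pt = mu ->
  sorting_order u Pt y idx ->
  (z < mu)%N ->
  (forall j, (j < mu)%N ->
     cleared_fit u 1 kappa Pt y idx z <= cleared_fit u 1 kappa Pt y idx j) ->
  (k < mu)%N ->
  0 < cleared_fit u 1 kappa Pt y idx k ->
  k != removed_index u 1 kappa Pt y idx z /\
  nth y Pt k \in next_pop u 1 kappa Pt y idx z.
Proof.
move=> upos k0 hmu hsz [hperm _] zmu zmin kmu kpos.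
have kr : k != removed_index u 1 kappa Pt y idx z.
  rewrite /removed_index; case: ifP => [hz|_]; last by rewrite hsz neq_ltn kmu.
  apply/eqP => kz; subst z.
  have allpos : forall j, (j <= mu)%N -> 0 < cleared_fit u 1 kappa Pt y idx j.
    move=> j; rewrite leq_eqVlt => /orP[/eqP ->|jm].
      by rewrite -hsz; apply: lt_le_trans hz.
    exact: lt_le_trans (zmin j jm).
  have sidx : size idx = mu.+1 by rewrite (perm_size hperm) size_iota hsz.
  have uidx : uniq idx by rewrite (perm_uniq hperm) iota_uniq.
  set Q := (fun i => ind Pt y (nth 0%N idx i)).
  set fit := (fun i => unitation u (ind Pt y (nth 0%N idx i))).
  have hcnt : count (fun p => (0 < clearing (@pheno_dist n) 1 kappa (size Pt).+1 Q fit p)%R)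
      (iota 0 (size Pt).+1) = mu.+1.
    rewrite (eq_in_count (a2 := predT)) ?count_predT ?size_iota ?hsz //.
    move=> p; rewrite mem_iota add0n /= => pm.
    have pin : nth 0%N idx p \in idx by rewrite mem_nth // sidx.
    have jm : (nth 0%N idx p <= mu)%N.
      by move: pin; rewrite (perm_mem hperm) mem_iota add0n hsz ltnS.
    by have := allpos _ jm; rewrite /cleared_fit index_uniq ?sidx ?hsz.
  have hd : forall i j, (pheno_dist (Q i) (Q j) < 1)%N = (ones (Q i) == ones (Q j)).
    by move=> i j; rewrite /pheno_dist; apply/idP/eqP; lia.
  have hN : forall p, (ones (Q p) < n.+1)%N.
    by move=> p; rewrite ltnS /ones -[X in (_ <= X)%N](size_tuple (Q p)) count_size.
  have := @total_bound _ _ (@pheno_dist n) 1 kappa (size Pt).+1 Q fit (fun p => ones (Q p)) n.+1 k0 hd hN.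
  rewrite hcnt; lia.
split=> //.
rewrite /next_pop; apply/mapP; exists k.
  rewrite mem_filter kr mem_iota hsz /=; lia.
by rewrite /ind /pstar nth_rcons hsz kmu.
Qed.
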